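(* Let $n,m\ge 2$ and let $\mathsf{R}=(\mathsf{R}_1,\dots,\mathsf{R}_m)\in(0,1]^m$. Consider the game $\mathcal{G}_{\rm perfect}$ in which each of the $n$ players $P_1,\dots,P_n$ chooses a mixed strategy $s^{(i)}=(s^{(i)}_1,\dots,s^{(i)}_m)\in\Delta_m$ (a probability vector over the $m$ servers) and receives expected utility $$u_i(s^{(1)},\dots,s^{(n)})=\sum_{j=1}^m \mathsf{R}_j\,\frac{s^{(i)}_j}{\sum_{k=1}^n s^{(k)}_j},$$ where a term with vanishing denominator is taken to be $0$. Then $\mathcal{G}_{\rm perfect}$ has a unique Nash equilibrium, namely the symmetric profile $s^*=(s^{*(1)},\dots,s^{*(n)})$ with $s^{*(i)}=\mathsf{N}(\mathsf{R})$ for every $i\in[n]$.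
   Context: For a nonzero vector $v\in[0,\infty)^m$, $\mathsf{N}(v)=\big(v_1/\|v\|_1,\dots,v_m/\|v\|_1\big)$ denotes its $L_1$-normalization. $\Delta_m=\{x\in[0,1]^m:\sum_j x_j=1\}$. Interpretation: $\mathsf{R}_j$ is the trustworthiness (probability of correct behaviour) of server $j$, known to all players (perfect information); the utility is the expected reward when server $j$ yields a unit reward with probability $\mathsf{R}_j$, split among players in proportion to their endorsement probabilities of server $j$. (In the paper's full game players may also endorse other players, but such actions are dominated; the game above is the resulting game with actions restricted to the servers.) A Nash equilibrium is a profile of mixed strategies in which no player can increase her expected utility by unilaterally changing her strategy. *)

(* Defs.v *)
From HB Require Import structures.
From mathcomp Require Import all_boot all_order all_algebra.
From mathcomp Require Import reals.
Set Implicit Arguments. Unset Strict Implicit. Unset Printing Implicit Defensive.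
Import Order.TTheory GRing.Theory Num.Theory.
Local Open Scope ring_scope.

(* Mixed strategy profile: s i j = probability that player i endorses server j. *)
Definition profile (R : realType) (n m : nat) := 'I_n -> 'I_m -> R.

Definition in_simplex (R : realType) (m : nat) (x : 'I_m -> R) : Prop :=
  (forall j, 0 <= x j) /\ \sum_(j < m) x j = 1.

Definition L1normalize (R : realType) (m : nat) (v : 'I_m -> R) : 'I_m -> R :=
  fun j => v j / \sum_(k < m) `|v k|.

Definition utility (R : realType) (n m : nat) (Rv : 'I_m -> R)
  (s : profile R n m) (i : 'I_n) : R :=
  \sum_(j < m)
    (let d := \sum_(k < n) s k j in
     if d == 0 then 0 else Rv j * (s i j / d)).

Definition deviate (R : realType) (n m : nat) (s : profile R n m)
  (i : 'I_n) (t : 'I_m -> R) : profile R n m :=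
  fun k => if k == i then t else s k.

Definition is_nash (R : realType) (n m : nat) (Rv : 'I_m -> R)
  (s : profile R n m) : Prop :=
  (forall i, in_simplex (s i)) /\
  (forall i (t : 'I_m -> R), in_simplex t ->
     utility Rv (deviate s i t) i <= utility Rv s i).

(* Main.v *)
Require Import Defs.
From HB Require Import structures.
From mathcomp Require Import all_boot all_order all_algebra.
From mathcomp Require Import reals ring lra.
Import Order.TTheory GRing.Theory Num.Theory.
Set Implicit Arguments. Unset Strict Implicit. Unset Printing Implicit Defensive.
Local Open Scope ring_scope.

Definition cc (R : realType) (n m : nat) (s : profile R n m) (i : 'I_n) (j : 'I_m) : R :=
  \sum_(k < n | k != i) s k j.

Definition FF (R : realType) (m : nat) (Rv : 'I_m -> R) (j : 'I_m) (x c : R) : R :=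
  if x + c == 0 then 0 else Rv j * (x / (x + c)).

Lemma tot_split (R : realType) (n m : nat) (s : profile R n m) i j :
  \sum_(k < n) s k j = s i j + cc s i j.
Proof. by rewrite (bigD1 i). Qed.

Lemma utility_dev (R : realType) (n m : nat) (Rv : 'I_m -> R) (s : profile R n m) i t :
  utility Rv (deviate s i t) i = \sum_(j < m) FF Rv j (t j) (cc s i j).
Proof.
rewrite /utility; apply: eq_bigr => j _ /=.
rewrite (bigD1 i) //= /deviate eqxx /FF.
have -> : \sum_(k < n | k != i) (if k == i then t else s k) j = cc s i j.
  by apply: eq_bigr => k /negbTE ->.
by [].
Qed.

Lemma utility_s (R : realType) (n m : nat) (Rv : 'I_m -> R) (s : profile R n m) i :
  utility Rv s i = \sum_(j < m) FF Rv j (s i j) (cc s i j).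
Proof.
by rewrite /utility; apply: eq_bigr => j _ /=; rewrite (tot_split s i j).
Qed.

Lemma limit_lem (R : realType) (A C K x : R) : 0 < x ->
  (forall e, 0 < e -> e < x -> A <= C + K * e) -> A <= C.
Proof.
move=> hx H; rewrite leNgt; apply/negP => hAC.
have hK : 0 <= `|K| by rewrite normr_ge0.
have hKK : K <= `|K| by rewrite ler_norm.
move: hK hKK; move: (`|K|) => K' hK hKK.
have hKx : 0 <= K' * x by rewrite mulr_ge0 // ltW.
have hD : 0 < K' * x + (A - C) by lra.
have [D hDdef] : exists D, D = K' * x + (A - C) by eexists.
rewrite -hDdef in hD.
have he : 0 < x * (A - C) / (2 * D) by rewrite divr_gt0 //; nra.
have hxAC : 0 < x * (A - C) by rewrite mulr_gt0 // subr_gt0.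
have hex : x * (A - C) / (2 * D) < x.
  rewrite ltr_pdivrMr // hDdef; have := mulr_ge0 (ltW hx) hKx; nra.
have h1 : K' * (x * (A - C) / (2 * D)) * (2 * D) = K' * x * (A - C) by field; lra.
move: he hex h1; move: (x * (A - C) / (2 * D)) => e he hex h1.
have h2 : K' * e < A - C.
  have : K' * e * (2 * D) < (A - C) * (2 * D) by rewrite h1; nra.
  by rewrite ltr_pM2r //; nra.
have := H e he hex. nra.
Qed.

Lemma sum_delta (R : realType) (m : nat) (b : 'I_m) :
  \sum_(j < m) ((j == b)%:R : R) = 1.
Proof.
rewrite (bigD1 b) //= eqxx big1 ?addr0 // => j /negbTE -> //.
Qed.

Lemma nash_move (R : realType) (n m : nat) (Rv : 'I_m -> R) (s : profile R n m) :
  is_nash Rv s -> forall i a b, a != b -> forall e, 0 < e -> e < s i a ->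
  FF Rv b (s i b + e) (cc s i b) - FF Rv b (s i b) (cc s i b) <=
  FF Rv a (s i a) (cc s i a) - FF Rv a (s i a - e) (cc s i a).
Proof.
move=> [hs hN] i a b hab e he hea.
have [hs0 hs1] := hs i.
pose t := fun j => s i j + e * ((j == b)%:R - (j == a)%:R).
have ht : in_simplex t.
  split.
    move=> j; rewrite /t; case: (eqVneq j a) => [->|hja].
      rewrite (negbTE hab) /= ?mulr1n ?mulr0n; have := hs0 a; lra.
    case: (eqVneq j b) => [->|hjb] /=; rewrite ?mulr1n ?mulr0n.
      have := hs0 b; lra.
    have := hs0 j; lra.
  rewrite /t big_split /= -mulr_sumr sumrB !sum_delta hs1; lra.
have := hN i t ht; rewrite utility_dev utility_s -subr_le0 -sumrB.
have hba : b != a by rewrite eq_sym.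
rewrite (bigD1 a) //= (bigD1 b) //=.
rewrite big1; last first.
  by move=> j /andP [hja hjb]; rewrite /t (negbTE hja) (negbTE hjb) /= ?mulr0n subr0 mulr0 addr0 subrr.
have -> : t a = s i a - e by rewrite /t eqxx (negbTE hab) /= ?mulr1n ?mulr0n; lra.
have -> : t b = s i b + e by rewrite /t eqxx eq_sym (negbTE hab) /= ?mulr1n ?mulr0n; lra.
lra.
Qed.

Lemma frac_le (R : realType) (p q r s : R) : 0 < q -> 0 < s -> p / q <= r / s -> p * s <= r * q.
Proof. move=> hq hs; rewrite ler_pdivrMr // mulrAC ler_pdivlMr //. Qed.

Lemma alg_pos (R : realType) (Ra Rb xa ca xb cb e : R) :
  0 < e -> e < xa -> 0 <= ca -> 0 <= cb -> 0 < xb + cb -> 0 <= xb ->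
  Rb * ((xb + e) / (xb + e + cb)) - Rb * (xb / (xb + cb)) <=
  Ra * (xa / (xa + ca)) - Ra * ((xa - e) / (xa - e + ca)) ->
  Rb * cb * (xa + ca) ^+ 2 <= Ra * ca * (xb + cb) ^+ 2 + (Rb * cb * (xa + ca) + Ra * ca * (xb + cb)) * e.
Proof.
move=> he hea hca hcb hTb hxb.
have h1 : 0 < xb + e + cb by lra.
have h2 : 0 < xa + ca by lra.
have h3 : 0 < xa - e + ca by lra.
have -> : Rb * ((xb + e) / (xb + e + cb)) - Rb * (xb / (xb + cb)) =
   (Rb * cb * e) / ((xb + cb) * (xb + e + cb)).
  by field; apply/andP; split; rewrite lt0r_neq0.
have -> : Ra * (xa / (xa + ca)) - Ra * ((xa - e) / (xa - e + ca)) =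
   (Ra * ca * e) / ((xa + ca) * (xa - e + ca)).
  by field; apply/andP; split; rewrite lt0r_neq0.
move/frac_le; rewrite !mulr_gt0 // => /(_ isT isT) h.
have E : e * (Ra * ca * (xb + cb) ^+ 2 + (Rb * cb * (xa + ca) + Ra * ca * (xb + cb)) * e
   - Rb * cb * (xa + ca) ^+ 2) =
   Ra * ca * e * ((xb + cb) * (xb + e + cb)) - Rb * cb * e * ((xa + ca) * (xa - e + ca)) by ring.
rewrite -subr_ge0 -(pmulr_rge0 _ he) E subr_ge0 //.
Qed.

Lemma alg_zero (R : realType) (Ra Rb xa ca e : R) :
  0 < e -> e < xa -> 0 <= ca ->
  Rb * ((0 + e) / (0 + e + 0)) - 0 <=
  Ra * (xa / (xa + ca)) - Ra * ((xa - e) / (xa - e + ca)) ->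
  Rb * (xa + ca) ^+ 2 <= 0 + (Rb * (xa + ca) + Ra * ca) * e.
Proof.
move=> he hea hca.
have h2 : 0 < xa + ca by lra.
have h3 : 0 < xa - e + ca by lra.
have -> : Rb * ((0 + e) / (0 + e + 0)) - 0 = Rb / 1.
  by field; rewrite lt0r_neq0.
have -> : Ra * (xa / (xa + ca)) - Ra * ((xa - e) / (xa - e + ca)) =
   (Ra * ca * e) / ((xa + ca) * (xa - e + ca)).
  by field; apply/andP; split; rewrite lt0r_neq0.
move/frac_le; rewrite !mulr_gt0 // ltr01 => /(_ isT isT) h.
have E : (0 + (Rb * (xa + ca) + Ra * ca) * e) - Rb * (xa + ca) ^+ 2 =
   Ra * ca * e * 1 - Rb * ((xa + ca) * (xa - e + ca)) by ring.
by rewrite -subr_ge0 E subr_ge0.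
Qed.

Lemma nash_s0 (R : realType) (n m : nat) (Rv : 'I_m -> R) (s : profile R n m) :
  is_nash Rv s -> forall i j, 0 <= s i j.
Proof. by move=> [hs _] i j; have [h _] := hs i. Qed.

Lemma nash_c0 (R : realType) (n m : nat) (Rv : 'I_m -> R) (s : profile R n m) :
  is_nash Rv s -> forall i j, 0 <= cc s i j.
Proof. by move=> hN i j; apply: sumr_ge0 => k _; apply: nash_s0 hN _ _. Qed.

Lemma key_pos (R : realType) (n m : nat) (Rv : 'I_m -> R) (s : profile R n m) :
  is_nash Rv s -> forall i a b, 0 < s i a -> 0 < s i b + cc s i b ->
  Rv b * cc s i b * (s i a + cc s i a) ^+ 2 <= Rv a * cc s i a * (s i b + cc s i b) ^+ 2.
Proof.
move=> hN i a b ha hb.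
case: (eqVneq a b) => [<-|hab]; first by [].
apply: (limit_lem ha) => e he hea.
have hca := nash_c0 hN i a; have hcb := nash_c0 hN i b; have hxb := nash_s0 hN i b.
apply: alg_pos => //.
have := nash_move hN hab he hea.
rewrite /FF !gt_eqF //; lra.
Qed.

Lemma key_zero (R : realType) (n m : nat) (Rv : 'I_m -> R) (s : profile R n m) :
  is_nash Rv s -> (forall j, 0 < Rv j) -> forall i a b, 0 < s i a -> 0 < s i b + cc s i b.
Proof.
move=> hN hR i a b ha.
have hca := nash_c0 hN i a; have hcb := nash_c0 hN i b; have hxb := nash_s0 hN i b.
rewrite lt_neqAle addr_ge0 // andbT; apply/negP => /eqP hT.
have e1 : s i b = 0 by lra.
have e2 : cc s i b = 0 by lra.
have hab : a != b by apply/negP => /eqP hab; move: ha; rewrite hab; lra.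
have : Rv b * (s i a + cc s i a) ^+ 2 <= 0.
  apply: (limit_lem ha) => e he hea.
  apply: (alg_zero (Ra := Rv a)) => //.
  have := nash_move hN hab he hea.
  rewrite e1 e2 /FF.
  have -> : (0 + 0 == 0 :> R) = true by rewrite addr0 eqxx.
  rewrite !gt_eqF //; lra.
have : 0 < Rv b * (s i a + cc s i a) ^+ 2.
  by rewrite mulr_gt0 ?hR // exprn_gt0 //; lra.
lra.
Qed.

Lemma L_alg (R : realType) (Ra Rb Ta Tb ca cb sa sb : R) :
  0 < Rb -> 0 < Ta -> Ta = sa + ca -> Tb = sb + cb ->
  Rb * cb * Ta ^+ 2 <= Ra * ca * Tb ^+ 2 -> Ta * Rb = Tb * Ra -> sa * Tb <= sb * Ta.
Proof.
move=> hRb hTa eA eB h hP.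
have hP0 : 0 < Ta * Rb by rewrite mulr_gt0.
have e1 : Rb * cb * Ta ^+ 2 = (Ta * Rb) * (cb * Ta) by ring.
have e2 : Ra * ca * Tb ^+ 2 = (Ta * Rb) * (ca * Tb) by rewrite hP; ring.
rewrite e1 e2 ler_pM2l // in h.
have e3 : sb * Ta - sa * Tb = ca * Tb - cb * Ta by rewrite eA eB; ring.
by rewrite -subr_ge0 e3 subr_ge0.
Qed.

Lemma S_alg (R : realType) (Ra Rb Ta Tb ca cb sa sb : R) :
  0 < Rb -> 0 < Ta -> 0 < Tb -> 0 < ca -> Ta = sa + ca -> Tb = sb + cb ->
  Rb * cb * Ta ^+ 2 <= Ra * ca * Tb ^+ 2 -> Tb * Ra < Ta * Rb -> sa * Tb < sb * Ta.
Proof.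
move=> hRb hTa hTb hca eA eB h hP.
have hP0 : 0 < Ta * Rb by rewrite mulr_gt0.
have hcT : 0 < ca * Tb by rewrite mulr_gt0.
have h2 : Ra * ca * Tb ^+ 2 < (Ta * Rb) * (ca * Tb).
  have -> : Ra * ca * Tb ^+ 2 = (Tb * Ra) * (ca * Tb) by ring.
  by rewrite ltr_pM2r.
have e1 : Rb * cb * Ta ^+ 2 = (Ta * Rb) * (cb * Ta) by ring.
have h3 : (Ta * Rb) * (cb * Ta) < (Ta * Rb) * (ca * Tb) by rewrite -e1; exact: le_lt_trans h h2.
rewrite ltr_pM2l // in h3.
have e3 : sb * Ta - sa * Tb = ca * Tb - cb * Ta by rewrite eA eB; ring.
by rewrite -subr_gt0 e3 subr_gt0.
Qed.

Lemma exists_pos (R : realType) (m : nat) (x : 'I_m -> R) :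
  in_simplex x -> exists a, 0 < x a.
Proof.
move=> [h0 h1]; case: (pickP (fun a => 0 < x a)) => [a ha | hn]; first by exists a.
have : \sum_(j < m) x j <= 0 by apply: sumr_le0 => j _; rewrite leNgt hn.
by rewrite h1 ler10.
Qed.

Lemma other_player (n : nat) (i : 'I_n) : (2 <= n)%N -> exists k : 'I_n, k != i.
Proof.
move=> hn.
have h0 : (0 < n)%N by apply: leq_trans hn.
have h1 : (1 < n)%N by [].
case: (eqVneq i (Ordinal h0)) => [->|hi].
  by exists (Ordinal h1).
by exists (Ordinal h0); rewrite eq_sym.
Qed.

Lemma T_pos (R : realType) (n m : nat) (Rv : 'I_m -> R) (s : profile R n m) :
  (2 <= n)%N -> is_nash Rv s -> (forall j, 0 < Rv j) -> forall b, 0 < \sum_(k < n) s k b.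
Proof.
move=> hn hN hR b.
have h0 : (0 < n)%N by apply: leq_trans hn.
have [a ha] := exists_pos (hN.1 (Ordinal h0)).
by rewrite (tot_split s (Ordinal h0)); exact: (key_zero hN hR b ha).
Qed.

Lemma key_T (R : realType) (n m : nat) (Rv : 'I_m -> R) (s : profile R n m) :
  (2 <= n)%N -> is_nash Rv s -> (forall j, 0 < Rv j) -> forall i a b, 0 < s i a ->
  Rv b * cc s i b * (\sum_(k < n) s k a) ^+ 2 <= Rv a * cc s i a * (\sum_(k < n) s k b) ^+ 2.
Proof.
move=> hn hN hR i a b ha; have hb := T_pos hn hN hR b; rewrite (tot_split s i) in hb.
rewrite !(tot_split s i); exact: (key_pos hN ha hb).
Qed.

Lemma cc_pos (R : realType) (n m : nat) (Rv : 'I_m -> R) (s : profile R n m) :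
  (2 <= n)%N -> is_nash Rv s -> (forall j, 0 < Rv j) -> forall i a, 0 < s i a -> 0 < cc s i a.
Proof.
move=> hn hN hR i a ha.
have [k hk] := other_player i hn.
have [j hj] := exists_pos (hN.1 k).
have hcj : 0 < cc s i j.
  rewrite /cc (bigD1 k) //=.
  have : 0 <= \sum_(l < n | (l != i) && (l != k)) s l j.
    by apply: sumr_ge0 => l _; apply: nash_s0 hN _ _.
  lra.
have := key_T hn hN hR j ha.
have hTa := T_pos hn hN hR a; have hTj := T_pos hn hN hR j.
have hca := nash_c0 hN i a.
rewrite lt_neqAle hca andbT; apply: contraTN => /eqP <-.
by rewrite mulr0 mul0r -ltNge !mulr_gt0 // ?exprn_gt0 // hR.
Qed.

Lemma exists_pos_sum (R : realType) (n : nat) (f : 'I_n -> R) :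
  0 < \sum_(k < n) f k -> exists k, 0 < f k.
Proof.
move=> h; case: (pickP (fun a => 0 < f a)) => [a ha | hn]; first by exists a.
have : \sum_(j < n) f j <= 0 by apply: sumr_le0 => j _; rewrite leNgt hn.
by rewrite leNgt h.
Qed.

Lemma ratio_le (R : realType) (n m : nat) (Rv : 'I_m -> R) (s : profile R n m) :
  (2 <= n)%N -> is_nash Rv s -> (forall j, 0 < Rv j) -> forall a b,
  (\sum_(k < n) s k a) * Rv b <= (\sum_(k < n) s k b) * Rv a.
Proof.
move=> hn hN hR a b; rewrite leNgt; apply/negP => hlt.
have hTa := T_pos hn hN hR a; have hTb := T_pos hn hN hR b.
have H : forall i, 0 < s i a ->
    s i a * (\sum_(k < n) s k b) < s i b * (\sum_(k < n) s k a).
  move=> i ha.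
  exact: (S_alg (hR b) hTa hTb (cc_pos hn hN hR ha) (tot_split s i a) (tot_split s i b) (key_T hn hN hR b ha) hlt).
have H' : forall i,
    s i a * (\sum_(k < n) s k b) <= s i b * (\sum_(k < n) s k a).
  move=> i; case: (ltrP 0 (s i a)) => hia; first exact: ltW (H i hia).
  have -> : s i a = 0 by have := nash_s0 hN i a; lra.
  by rewrite mul0r mulr_ge0 // ?(nash_s0 hN) // ltW.
have [i0 hi0] := exists_pos_sum hTa.
have : \sum_(i < n) s i a * (\sum_(k < n) s k b) < \sum_(i < n) s i b * (\sum_(k < n) s k a).
  rewrite (bigD1 i0) //= [X in _ < X](bigD1 i0) //=.
  apply: ltr_leD; first exact: H.
  by apply: ler_sum => i _; apply: H'.
rewrite -!mulr_suml; lra.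
Qed.

Lemma nash_unique (R : realType) (n m : nat) (Rv : 'I_m -> R) (s : profile R n m) :
  (2 <= n)%N -> is_nash Rv s -> (forall j, 0 < Rv j) -> forall i b,
  s i b = Rv b / \sum_(k < m) Rv k.
Proof.
move=> hn hN hR i b.
have [a0 ha0] := exists_pos (hN.1 i).
have hT := T_pos hn hN hR.
have heq : forall a b, (\sum_(k < n) s k a) * Rv b = (\sum_(k < n) s k b) * Rv a.
  by move=> a c; apply/le_anti; rewrite ratio_le ?ratio_le.
have L : forall a c, 0 < s i a -> s i a * (\sum_(k < n) s k c) <= s i c * (\sum_(k < n) s k a).
  move=> a c ha.
  exact: (L_alg (hR c) (hT a) (tot_split s i a) (tot_split s i c) (key_T hn hN hR c ha) (heq a c)).
have hpos : forall c, 0 < s i c.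
  move=> c; have := L a0 c ha0; have := nash_s0 hN i c.
  rewrite le_eqVlt => /orP [/eqP <-|//].
  by rewrite mul0r leNgt mulr_gt0.
have E : forall c, s i c * Rv a0 = s i a0 * Rv c.
  move=> c.
  have h1 : s i c * (\sum_(k < n) s k a0) = s i a0 * (\sum_(k < n) s k c).
    by apply/le_anti; rewrite L ?L.
  apply: (mulIf (lt0r_neq0 (hT a0))).
  have e2 := heq a0 c.
  by rewrite mulrAC h1 -mulrA -e2; ring.
have hS : Rv a0 = s i a0 * \sum_(k < m) Rv k.
  have := hN.1 i => -[_ h1].
  by rewrite mulr_sumr -(eq_bigr _ (fun c _ => E c)) -mulr_suml h1 mul1r.
have hSpos : 0 < \sum_(k < m) Rv k.
  rewrite (bigD1 a0) //=; have := hR a0.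
  have : 0 <= \sum_(k < m | k != a0) Rv k by apply: sumr_ge0 => k _; apply: ltW.
  lra.
apply: (mulIf (lt0r_neq0 hSpos)); rewrite divfK ?lt0r_neq0 //.
apply: (mulIf (lt0r_neq0 (hpos a0))).
by rewrite -mulrA (mulrC _ (s i a0)) -hS E mulrC.
Qed.

Lemma P1_alg (R : realType) (S q x N : R) :
  0 < S -> 0 < q -> 0 <= x -> 1 < N ->
  S * q * (x / (x + q * (N - 1))) - S * q * (q / (q + q * (N - 1))) <=
  S * (N - 1) / N ^+ 2 * (x - q).
Proof.
move=> hS hq hx hN.
have hN1 : 0 < N - 1 by lra.
have hqN := mulr_gt0 hq hN1.
have hD : 0 < x + q * (N - 1) by lra.
have hq2 : 0 < q + q * (N - 1) by lra.
have E : S * (N - 1) / N ^+ 2 * (x - q) -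
  (S * q * (x / (x + q * (N - 1))) - S * q * (q / (q + q * (N - 1)))) =
  S * (N - 1) * (x - q) ^+ 2 / (N ^+ 2 * (x + q * (N - 1))).
  field; rewrite !lt0r_neq0 //; try lra.
rewrite -subr_ge0 E divr_ge0 //.
  by apply: mulr_ge0; [apply: mulr_ge0; lra | exact: sqr_ge0].
by apply: mulr_ge0; [exact: sqr_ge0 | lra].
Qed.

From Stdlib Require Import FunctionalExtensionality.
Unset Implicit Arguments.

Theorem mainTheorem1 (R : realType) (n m : nat) (Rv : 'I_m -> R) :
  (2 <= n)%N -> (2 <= m)%N ->
  (forall j, 0 < Rv j <= 1) ->
  (is_nash Rv (fun _ : 'I_n => L1normalize Rv) /\
   forall s : profile R n m, is_nash Rv s -> s = (fun _ : 'I_n => L1normalize Rv)).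
Proof.
move=> hn hm hR.
have hRp : forall j, 0 < Rv j by move=> j; case/andP: (hR j).
have hm0 : (0 < m)%N by apply: leq_trans hm.
have hS : 0 < \sum_(k < m) Rv k.
  rewrite (bigD1 (Ordinal hm0)) //=; have := hRp (Ordinal hm0).
  have : 0 <= \sum_(k < m | k != Ordinal hm0) Rv k by apply: sumr_ge0 => k _; apply: ltW.
  lra.
have hAbs : \sum_(k < m) `|Rv k| = \sum_(k < m) Rv k.
  by apply: eq_bigr => k _; rewrite gtr0_norm.
have hq : L1normalize Rv = fun j => Rv j / \sum_(k < m) Rv k.
  by rewrite /L1normalize hAbs.
split; last first.
  move=> s hN; apply: functional_extensionality => i.
  apply: functional_extensionality => b; rewrite hq.
  exact: nash_unique.
rewrite hq.
have [S hSdef] : exists S, S = \sum_(k < m) Rv k by eexists.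
rewrite -hSdef in hS *.
have hsimp : in_simplex (fun j => Rv j / S).
  split; first by move=> j; rewrite divr_ge0 // ltW.
  by rewrite -mulr_suml hSdef divff // -hSdef lt0r_neq0.
split; first by move=> i.
move=> i t ht; rewrite utility_dev utility_s.
set q := fun j => Rv j / S.
have hN1 : 1 < (n%:R : R) by rewrite ltr1n.
have hN1' : 0 < (n%:R : R) - 1 by lra.
have hcc : forall j, cc (fun _ : 'I_n => q) i j = q j * (n%:R - 1).
  move=> j; have := tot_split (fun _ : 'I_n => q) i j.
  rewrite sumr_const card_ord => e.
  have -> : cc (fun _ : 'I_n => q) i j = q j * n%:R - q j by rewrite mulr_natr e; ring.
  ring.
have hqpos : forall j, 0 < q j by move=> j; rewrite /q divr_gt0.
have [ht0 ht1] := ht.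
rewrite -subr_le0 -sumrB.
apply: (@le_trans _ _ (\sum_(j < m) (S * (n%:R - 1) / n%:R ^+ 2 * (t j - q j)))).
  apply: ler_sum => j _.
  have hqj : 0 < Rv j / S := hqpos j.
  have hc := mulr_gt0 hqj hN1'.
  have htj := ht0 j.
  have eR : S * (Rv j / S) = Rv j by rewrite mulrC divfK // lt0r_neq0.
  have := P1_alg hS hqj (ht0 j) hN1; rewrite eR.
  rewrite hcc /q /FF.
  rewrite (gt_eqF (_ : 0 < t j + Rv j / S * (n%:R - 1))); last lra.
  rewrite (gt_eqF (_ : 0 < Rv j / S + Rv j / S * (n%:R - 1))); last lra.
  by [].
by rewrite -mulr_sumr sumrB ht1 (proj2 hsimp) subrr mulr0.
Qed.
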